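(* Let $l\ge3$ be an integer and $x_1,\dots,x_l$ pairwise distinct real numbers, and set $a_{m,n}=\frac{1}{x_m-x_n}$ for $m\ne n$. Denoting by $\mathcal{S}_l$ the set of permutations of $\{1,\dots,l\}$, $$\sum_{\sigma\in\mathcal{S}_l} a_{\sigma(1),\sigma(2)}\,a_{\sigma(2),\sigma(3)}\cdots a_{\sigma(l-1),\sigma(l)}\,a_{\sigma(l),\sigma(1)}=0.$$ *)

(* Defs.v *)
From HB Require Import structures.
From mathcomp Require Import all_boot all_order all_algebra all_fingroup.
Set Implicit Arguments. Unset Strict Implicit. Unset Printing Implicit Defensive.
Import Order.TTheory GRing.Theory Num.Theory.
Local Open Scope ring_scope.

Definition acoef (R : fieldType) (l : nat) (x : 'I_l -> R) (m n : 'I_l) : R :=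
  (x m - x n)^-1.

(* cyclic successor on 'I_l : i |-> i+1 mod l (so the last index wraps to 0) *)
Definition cyc_succ (l : nat) (i : 'I_l) : 'I_l := ordS i.

(* Main.v *)
Require Import Defs.
From HB Require Import structures.
From mathcomp Require Import all_boot all_order all_algebra all_fingroup.
From mathcomp Require Import ring zify.
Import Order.TTheory GRing.Theory Num.Theory.
Local Open Scope ring_scope.

Section Aux.
Variable R : realFieldType.
Variable n : nat.

Definition bb (u v : R) : R := (u - v)^-1.

Definition cycp (y : nat -> R) : R :=
  bb (y 0%N) (y 1%N) * (\prod_(i < n.+1) bb (y i.+1) (y i.+2)) * bb (y n.+2) (y 0%N).

Definition Gp (y : nat -> R) : R :=
  (\prod_(i < n.+1) bb (y i.+1) (y i.+2)) * bb (y n.+2) (y 1%N).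

Lemma key_id (p z q : R) : p != z -> z != q -> p != q ->
  bb p z * bb z q = bb p q * (bb p z + bb z q).
Proof.
move=> hpz hzq hpq; rewrite /bb.
have h1 : p - z != 0 by rewrite subr_eq0.
have h2 : z - q != 0 by rewrite subr_eq0.
have h3 : p - q != 0 by rewrite subr_eq0.
field; rewrite ?h1 ?h2 ?h3 //.
Qed.

Lemma cycp_split (y : nat -> R) : y n.+2 != y 0%N -> y 0%N != y 1%N -> y n.+2 != y 1%N ->
  cycp y = Gp y * bb (y n.+2) (y 0%N) + Gp y * bb (y 0%N) (y 1%N).
Proof.
move=> h1 h2 h3; rewrite /cycp /Gp -mulrDr.
have K := key_id _ _ _ h1 h2 h3.
rewrite -[RHS]mulrA -K; ring.
Qed.

Definition gn (j : nat) : nat := if j == 0%N then 0%N else if j == n.+2 then 1%N else j.+1.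

Lemma Gp_shift (y y' : nat -> R) : (forall j, (j <= n.+2)%N -> y' j = y (gn j)) ->
  Gp y' = Gp y.
Proof.
move=> hy; rewrite /Gp big_ord_recr big_ord_recl /=.
have e : forall i : 'I_n, bb (y' i.+1) (y' i.+2) = bb (y (bump 0 i).+1) (y (bump 0 i).+2).
  move=> i; have hi := ltn_ord i.
  rewrite !hy; try lia.
  rewrite /gn /bump /=. 
  have -> : (i.+1 == n.+2) = false by apply/eqP; lia.
  have -> : (i.+2 == n.+2) = false by apply/eqP; lia.
  by rewrite add1n.
rewrite (eq_bigr _ (fun i _ => e i)).
rewrite !hy //; try lia.
rewrite /gn /=.
have -> : (n.+1 == n.+2) = false by apply/eqP; lia.
rewrite eqxx.
ring.
Qed.

End Aux.
Arguments bb {R}.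
Arguments key_id {R}.
Arguments cycp_split {R n y}.
Arguments Gp_shift {R n y y'}.

Lemma prod_cycp (R : realFieldType) n (x : 'I_n.+3 -> R) (s : 'S_n.+3) :
  \prod_(i < n.+3) acoef x (s i) (s (cyc_succ i)) = @cycp R n (fun j => x (s (inord j))).
Proof.
set y := fun j => x (s (inord j)).
have e : forall i : 'I_n.+3, acoef x (s i) (s (cyc_succ i)) = bb (y i) (y ((i.+1) %% n.+3)%N).
  move=> i; rewrite /acoef /bb /y inord_val; congr ((x (s _) - x (s _))^-1).
  by apply: val_inj; rewrite /= inordK // ltn_pmod.
rewrite (eq_bigr _ (fun i _ => e i)) big_ord_recl big_ord_recr /= /cycp.
rewrite modn_small // modnn.
rewrite mulrA; congr (_ * _ * _).
apply: eq_bigr => i _; rewrite /bump /= add1n modn_small //.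
have := ltn_ord i; lia.
Qed.
Arguments prod_cycp {R n}.

Definition pf n (i : 'I_n.+3) : 'I_n.+3 := inord (gn n i).

Lemma gn_le n j : (j <= n.+2)%N -> (gn n j <= n.+2)%N.
Proof. rewrite /gn; case: eqP => _; first by []. case: eqP => h //; lia. Qed.

Lemma pf_inj n : injective (@pf n).
Proof.
move=> i j /(congr1 val); rewrite /pf /= !inordK; last first.
all: try (apply: gn_le; have := ltn_ord i; have := ltn_ord j; lia).
move=> h; apply: val_inj => /=.
have hi := ltn_ord i; have hj := ltn_ord j.
move: h; rewrite /gn.
case: (eqP (x:=nat_of_ord i)) => ei; case: (eqP (x:=nat_of_ord j)) => ej; try lia;
case: (eqP (x:=nat_of_ord i) (y:=n.+2)) => fi; case: (eqP (x:=nat_of_ord j) (y:=n.+2)) => fj; lia.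
Qed.

Theorem lemma4 (R : realFieldType) (l : nat) (hl : (3 <= l)%N)
  (x : 'I_l -> R) (hx : injective x) :
  \sum_(s : 'S_l) \prod_(i < l) acoef x (s i) (s (cyc_succ i)) = 0.
Proof.
case: l hl x hx => [|[|[|n]]] // _ x hx.
pose y (s : 'S_n.+3) := fun j => x (s (inord j)).
have dist : forall (s : 'S_n.+3) j k, (j <= n.+2)%N -> (k <= n.+2)%N -> j != k -> y s j != y s k.
  move=> s j k hj hk; apply: contra => /eqP /hx /perm_inj /(congr1 val).
  by rewrite /= !inordK // => ->.
rewrite (eq_bigr _ (fun s _ => prod_cycp x s)).
rewrite (eq_bigr _ (fun s _ => cycp_split (dist s _ _ _ _ _) (dist s _ _ _ _ _) (dist s _ _ _ _ _))) //.
rewrite big_split /=.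
pose p : 'S_n.+3 := perm (@pf_inj n).
rewrite (reindex_inj (mulgI p)) /=.
have ey : forall s j, (j <= n.+2)%N -> y (p * s)%g j = y s (gn n j).
  move=> s j hj; rewrite /y permM permE /pf inordK //.
have hG : forall s, Gp R n (y (p * s)%g) = Gp R n (y s).
  by move=> s; apply: Gp_shift => j hj; apply: ey.
rewrite -big_split /=; apply: big1 => s _.
rewrite hG !ey // /gn /= eqxx.

rewrite /bb -mulrDr.
have -> : (y s 1%N - y s 0%N)^-1 = - (y s 0%N - y s 1%N)^-1 by rewrite -invrN opprB.
by rewrite addNr mulr0.
Qed.
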